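(* Let $A=\begin{bmatrix}0&B\\0&C\end{bmatrix}$ act on $\mathbb{C}^m\oplus\mathbb{C}^d$, with $B\in M_{m\times d}$, $C\in M_d$ and $B^*B+C^*C=I_d$, and let $D=I_d-C^*C$. Define $P_C(x,y)=\det(I-xC-yC^* )$ and $Q_C(x,y)=\det(I-xC-yC^*-xyD)$. Then for every $z\in\mathbb{C}\setminus\{0\}$ and $\theta\in\mathbb{R}$, $$\det(zI-e^{-i\theta}A-e^{i\theta}A^* )=z^{m+d}Q_C\!\left(\tfrac{e^{-i\theta}}{z},\tfrac{e^{i\theta}}{z}\right),\qquad \det(zI-e^{-i\theta}C-e^{i\theta}C^* )=z^{d}P_C\!\left(\tfrac{e^{-i\theta}}{z},\tfrac{e^{i\theta}}{z}\right).$$ Consequently: (i) $A$ has the Circularity property if and only if $Q_C(x,y)\in\mathbb{C}[xy]$ (i.e. $Q_C$ is a polynomial in the product $xy$ alone); (ii) $C$ has the Circularity property if and only if $P_C(x,y)\in\mathbb{C}[xy]$.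
   Context: For $X\in M_n(\mathbb{C})$, $H_X(\theta)=\frac12(e^{-i\theta}X+e^{i\theta}X^* )$; $X$ has the Circularity property if the spectrum of $H_X(\theta)$ is independent of $\theta\in\mathbb{R}$. *)

(* Defs.v *)
From HB Require Import structures.
From mathcomp Require Import all_boot all_order all_algebra.
From mathcomp Require Import all_classical all_reals.
From mathcomp Require Import trigo.
From mathcomp.real_closed Require Import complex.
Set Implicit Arguments. Unset Strict Implicit. Unset Printing Implicit Defensive.
Import Order.TTheory GRing.Theory Num.Theory.
Local Open Scope ring_scope.
Local Open Scope complex_scope.

Section Defs.
Variable R : realType.
Local Notation K := R[i].

Definition expi (t : R) : K := cos t +i* sin t.

Definition adjmx m n (M : 'M[K]_(m, n)) : 'M[K]_(n, m) := (map_mx conjc M)^T.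

Definition Hmx n (X : 'M[K]_n) (t : R) : 'M[K]_n :=
  2^-1 *: (expi (- t) *: X + expi t *: adjmx X).

Definition circular n (X : 'M[K]_n) : Prop :=
  forall t1 t2 : R, forall a : K, eigenvalue (Hmx X t1) a = eigenvalue (Hmx X t2) a.

(* bivariate polynomials: outer variable y, inner variable x *)
Definition polyx : {poly {poly K}} := (polyX K)%:P.
Definition polyy : {poly {poly K}} := polyX {poly K}.
Definition cst2 (c : K) : {poly {poly K}} := c%:P%:P.
Definition lift2 m n (M : 'M[K]_(m, n)) : 'M[{poly {poly K}}]_(m, n) := map_mx cst2 M.

Definition eval2 (p : {poly {poly K}}) (x y : K) : K := (p.[y%:P]).[x].

Definition PC d (C : 'M[K]_d) : {poly {poly K}} :=
  \det (1%:M - polyx *: lift2 C - polyy *: lift2 (adjmx C)).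

Definition QC d (C : 'M[K]_d) : {poly {poly K}} :=
  \det (1%:M - polyx *: lift2 C - polyy *: lift2 (adjmx C)
        - (polyx * polyy) *: lift2 (1%:M - adjmx C *m C)).

Definition in_Cxy (p : {poly {poly K}}) : Prop :=
  exists q : {poly K}, p = (map_poly cst2 q).[polyx * polyy].

End Defs.

(* Main.v *)
Require Import Defs.
From HB Require Import structures.
From mathcomp Require Import all_boot all_order all_algebra.
From mathcomp Require Import all_classical all_reals.
From mathcomp Require Import trigo.
From mathcomp.real_closed Require Import complex.
From mathcomp.algebra_tactics Require Import ring.
From Stdlib Require Import Classical.
From mathcomp Require Import zify.
Import Order.TTheory GRing.Theory Num.Theory.
Set Implicit Arguments. Unset Strict Implicit. Unset Printing Implicit Defensive.
Local Open Scope ring_scope.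
Local Open Scope complex_scope.
Section S.
Variable R : realType.
Local Notation K := R[i].
Lemma expiNM (t : R) : expi (- t) * expi t = 1.
Proof. rewrite /expi cosN sinN /GRing.mul /=.
by rewrite mulNr opprK -!expr2 cos2Dsin2 mulNr [cos t * _]mulrC subrr.
Qed.
Lemma expi_conj (t : R) : conjc (expi t) = expi (- t).
Proof. by rewrite /expi cosN sinN. Qed.
Lemma expiMN (t : R) : expi t * expi (- t) = 1.
Proof. by rewrite mulrC expiNM. Qed.
Lemma expi_neq0 (t : R) : expi t != 0.
Proof. by apply/eqP => h; have := expiNM t; rewrite h mulr0 => /eqP; rewrite eq_sym oner_eq0. Qed.
Lemma expiN (t : R) : expi (- t) = (expi t)^-1.
Proof. by apply: (mulIf (expi_neq0 t)); rewrite expiNM mulVf // expi_neq0. Qed.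

Lemma poly0_inj (p : {poly K}) (f : nat -> K) : injective f ->
  (forall k, p.[f k] = 0) -> p = 0.
Proof.
move=> fi h; apply/eqP; apply/negPn/negP => pn0.
have H1 : all (root p) (map f (iota 0 (size p))).
  by apply/allP => x /mapP [k _ ->]; apply/rootP.
have H2 : uniq (map f (iota 0 (size p))) by rewrite map_inj_uniq // iota_uniq.
by have := max_poly_roots pn0 H1 H2; rewrite size_map size_iota ltnn.
Qed.

Lemma poly0_nz (p : {poly K}) : (forall u, u != 0 -> p.[u] = 0) -> p = 0.
Proof.
move=> h; apply: (@poly0_inj p (fun k => k.+1%:R)).
  by move=> a b /eqP; rewrite eqr_nat => /eqP [].
by move=> k; apply: h; rewrite pnatr_eq0.
Qed.

Lemma poly0_circ (p : {poly K}) : (forall t, p.[expi t] = 0) -> p = 0.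
Proof.
move=> h; apply: (@poly0_inj p (fun k => expi (acos (k.+1%:R^-1)))); last by [].
have Hin k : -1 <= (k.+1%:R^-1 : R) <= 1.
  apply/andP; split; first by apply: (le_trans (y := 0)); rewrite ?lerN10 ?invr_ge0 ?ler0n.
  by rewrite invf_le1 ?ltr0Sn // ler1n.
move=> a b /(congr1 (@complex.Re R)) /=.
have Hin2 k : acos (k.+1%:R^-1 : R) \in `[0, pi].
  by rewrite in_itv /= acos_ge0 ?acos_lepi ?Hin.
move/(cos_inj (Hin2 a) (Hin2 b)).
move/(congr1 cos); rewrite !acosK ?in_itv /= ?Hin //.
by move/invr_inj/eqP; rewrite eqr_nat => /eqP [].
Qed.
Lemma hchar n (M : 'M[K]_n) z : (char_poly M).[z] = \det (z%:M - M).
Proof.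
rewrite /char_poly -[_.[z]]/(horner_eval z _) -det_map_mx.
congr (\det _); apply/matrixP => i j; rewrite !mxE.
by rewrite rmorphB rmorphMn /= horner_evalE hornerX horner_evalE hornerC.
Qed.

Lemma eval2_det n (M : 'M[{poly {poly K}}]_n) x y :
  eval2 (\det M) x y = \det (map_mx (fun p => (p.[y%:P]).[x]) M).
Proof.
rewrite /eval2 -[_.[y%:P]]/(horner_eval y%:P _) -det_map_mx.
rewrite -[_.[x]]/(horner_eval x _) -det_map_mx.
by congr (\det _); apply/matrixP => i j; rewrite !mxE.
Qed.

Lemma ev_PC d (C : 'M[K]_d) x y :
  eval2 (PC C) x y = \det (1%:M - x *: C - y *: adjmx C).
Proof.
rewrite /PC eval2_det; congr (\det _); apply/matrixP => i j.
by rewrite /polyx /polyy /lift2 /cst2 !mxE !hornerE; case: (i == j); rewrite !hornerE.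
Qed.

Lemma ev_QC d (C : 'M[K]_d) x y :
  eval2 (QC C) x y = \det (1%:M - x *: C - y *: adjmx C - (x * y) *: (1%:M - adjmx C *m C)).
Proof.
rewrite /QC eval2_det; congr (\det _); apply/matrixP => i j.
rewrite /polyx /polyy /lift2 /cst2 !mxE !hornerE; by case: (i == j); rewrite !hornerE.
Qed.
Lemma adjmx_block m d (B : 'M[K]_(m,d)) (C : 'M[K]_d) :
  adjmx (block_mx 0 B 0 C : 'M_(m + d)) = block_mx 0 0 (adjmx B) (adjmx C).
Proof.
rewrite /adjmx map_block_mx tr_block_mx; congr block_mx;
  by apply/matrixP => i j; rewrite !mxE /= ?oppr0.
Qed.

Lemma det_schur m d (z : K) (U : 'M_(m,d)) (L : 'M_(d,m)) (Dm : 'M_d) :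
  z != 0 -> \det (block_mx (z%:M) U L Dm) = z ^+ m * \det (Dm - z^-1 *: (L *m U)).
Proof.
move=> z0.
have -> : block_mx (z%:M) U L Dm = block_mx 1%:M 0 (z^-1 *: L) 1%:M *m
           block_mx (z%:M) U 0 (Dm - z^-1 *: (L *m U)).
  rewrite mulmx_block !mul1mx !mul0mx ?mulmx0 !addr0 ?add0r.
  by rewrite mul_mx_scalar scalerA mulfV // scale1r -scalemxAl addrC subrK.
by rewrite det_mulmx det_lblock det_ublock !det1 det_scalar !mul1r.
Qed.

Lemma part1a m d (B : 'M[K]_(m,d)) (C : 'M[K]_d)
  (hBC : adjmx B *m B + adjmx C *m C = 1%:M) z t : z != 0 ->
  \det (z%:M - expi (- t) *: (block_mx 0 B 0 C : 'M_(m + d)) - expi t *: adjmx (block_mx 0 B 0 C : 'M_(m + d)))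
  = z ^+ (m + d) * eval2 (QC C) (expi (- t) / z) (expi t / z).
Proof.
move=> z0; rewrite adjmx_block ev_QC expiN.
set b := expi t; have b0 : b != 0 by exact: expi_neq0.
rewrite (scalar_mx_block m d z) !scale_block_mx !scaler0.
rewrite !(opp_block_mx, add_block_mx) !subr0 !sub0r.
rewrite (det_schur _ _ _ z0) exprD -mulrA.
rewrite -[z ^+ d * _]detZ.
congr (_ * \det _).
rewrite mulNmx mulmxN opprK -scalemxAl -scalemxAr scalerA.
have -> : adjmx B *m B = 1%:M - adjmx C *m C by rewrite -hBC addrK.
move: (1%:M - _) => Dm.
apply/matrixP => i j; rewrite !mxE.
by case: (i == j); rewrite ?mulr1n ?mulr0n; field; rewrite b0 z0.
Qed.
Lemma part1b d (C : 'M[K]_d) z t : z != 0 ->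
  \det (z%:M - expi (- t) *: C - expi t *: adjmx C)
  = z ^+ d * eval2 (PC C) (expi (- t) / z) (expi t / z).
Proof.
move=> z0; rewrite ev_PC expiN -detZ.
set b := expi t; have b0 : b != 0 by exact: expi_neq0.
congr (\det _); apply/matrixP => i j; rewrite !mxE.
by case: (i == j); rewrite ?mulr1n ?mulr0n; field; rewrite b0 z0.
Qed.

Definition Gm n (X : 'M[K]_n) t := expi (- t) *: X + expi t *: adjmx X.
Definition cp n (X : 'M[K]_n) t := char_poly (Gm X t).

Lemma eig_cp n (X : 'M[K]_n) t a : eigenvalue (Hmx X t) a = root (cp X t) (2 * a).
Proof.
rewrite eigenvalue_root_char /root hchar /cp hchar /Hmx -/(Gm X t).
have -> : a%:M - 2^-1 *: Gm X t = 2^-1 *: ((2*a)%:M - Gm X t).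
  apply/matrixP => i j; rewrite !mxE.
  have h2 : (2 : K) != 0 by rewrite pnatr_eq0.
  by case: (i == j); rewrite ?mulr1n ?mulr0n; field.
by rewrite detZ mulf_eq0 expf_eq0 invr_eq0 pnatr_eq0 andbF.
Qed.

Lemma circ_of_const n (X : 'M[K]_n) : (forall t1 t2, cp X t1 = cp X t2) -> circular X.
Proof. by move=> h t1 t2 a; rewrite !eig_cp (h t1 t2). Qed.

Lemma poly_eq_nz (p q : {poly K}) : (forall u, u != 0 -> p.[u] = q.[u]) -> p = q.
Proof.
move=> h; apply/eqP; rewrite -subr_eq0; apply/eqP; apply: poly0_nz => u u0.
by rewrite hornerD hornerN h // subrr.
Qed.

Lemma eval2_Cxy (q : {poly K}) x y :
  eval2 ((map_poly (@cst2 R) q).[polyx R * polyy R]) x y = q.[x * y].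
Proof.
rewrite /eval2 -[_.[y%:P]]/(horner_eval y%:P _) -horner_map -map_poly_comp.
rewrite /= !horner_evalE.
have -> : (polyx R * polyy R).[y%:P] = 'X * y%:P.
  by rewrite /polyx /polyy !hornerE.
rewrite -[_.[x]]/(horner_eval x _) -horner_map -map_poly_comp /= !horner_evalE.
rewrite hornerM hornerX hornerC.
congr (_.[_]); apply/polyP => i; rewrite coef_map_id0 /=.
  by rewrite /cst2 !horner_evalE !hornerC.
by rewrite /cst2 !horner_evalE !hornerC.
Qed.

End S.
Section S.
Variable R : realType.
Local Notation K := R[i].
Lemma const_of_Cxy n (X : 'M[K]_n) (P : {poly {poly K}}) :
  (forall z t, z != 0 -> (cp X t).[z] = z ^+ n * eval2 P (expi (- t) / z) (expi t / z)) ->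
  in_Cxy P -> forall t1 t2, cp X t1 = cp X t2.
Proof.
move=> H [q Pq] t1 t2; apply: poly_eq_nz => z z0.
apply: (etrans (H z t1 z0)); apply/esym; apply: (etrans (H z t2 z0)).
have key t : expi (- t) / z * (expi t / z) = (z * z)^-1.
  by rewrite mulrACA expiNM mul1r invfM.
by rewrite Pq !eval2_Cxy !key.
Qed.
Definition Fb n (X : 'M[K]_n) : {poly {poly K}} :=
  \det ((polyx R * polyy R) *: 1%:M - lift2 X - (polyy R)^+2 *: lift2 (adjmx X)).

Lemma Frep n (X : 'M[K]_n) z t :
  eval2 (Fb X) z (expi t) = expi t ^+ n * (cp X t).[z].
Proof.
rewrite /Fb eval2_det hchar -detZ /cp /Gm expiN.
set w := expi t; have w0 : w != 0 by exact: expi_neq0.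
congr (\det _); apply/matrixP => i j; rewrite !mxE /polyx /polyy /cst2.
by case: (i == j); rewrite ?mulr1n ?mulr0n !hornerE; field.
Qed.

Definition Fz n (X : 'M[K]_n) z := map_poly (horner_eval z) (Fb X).

Lemma Fz_ev n (X : 'M[K]_n) z w : (Fz X z).[w] = eval2 (Fb X) z w.
Proof.
rewrite /Fz /eval2 -[_.[z]]/(horner_eval z _) -horner_map /=.
by rewrite horner_evalE hornerC.
Qed.

Lemma cover_circ (T : eqType) (g : R -> T) (D : seq T) :
  (forall t, g t \in D) ->
  (forall d, d \in D -> exists2 h : {poly K}, h != 0 & forall t, g t = d -> h.[expi t] = 0) -> False.
Proof.
move=> gD hD.
have [H H0 HH] : exists2 H : {poly K}, H != 0 & forall t, g t \in D -> H.[expi t] = 0.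
  elim: D hD {gD} => [|d D IH] hD.
    by exists 1; [exact: oner_neq0 | by []].
  have [h h0 hh] := hD d (mem_head _ _).
  have [H H0 HH] : exists2 H : {poly K}, H != 0 & forall t, g t \in D -> H.[expi t] = 0.
    by apply: IH => d' hd'; apply: hD; rewrite inE hd' orbT.
  exists (h * H); first by rewrite mulf_neq0.
  move=> t; rewrite inE => /orP [/eqP e | e]; rewrite hornerM.
    by rewrite hh // mul0r.
  by rewrite HH // mulr0.
move/negP: H0; apply; apply/eqP; apply: poly0_circ => t; exact: HH.
Qed.
End S.
Section S.
Variable R : realType.
Local Notation K := R[i].
Definition Sroots n (X : 'M[K]_n) : seq K := sval (closed_field_poly_normal (cp X 0)).

Definition Dset n (X : 'M[K]_n) : seq {poly K} :=
  codom (fun f : {ffun 'I_n -> 'I_(size (Sroots X))} =>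
           \prod_(i < n) ('X - (nth 0 (Sroots X) (f i))%:P)).

Lemma cp_monic n (X : 'M[K]_n) t : lead_coef (cp X t) = 1.
Proof. by apply/monicP; exact: char_poly_monic. Qed.

Lemma inD n (X : 'M[K]_n) :
  (forall t z, root (cp X t) z = root (cp X 0) z) -> forall t, cp X t \in Dset X.
Proof.
move=> hr t.
have E0 : cp X 0 = \prod_(x <- Sroots X) ('X - x%:P).
  rewrite /Sroots; case: (closed_field_poly_normal _) => /= S ES.
  by rewrite {1}ES cp_monic scale1r.
have [rs Ers] := closed_field_poly_normal (cp X t).
rewrite cp_monic scale1r in Ers.
have Hsize : size rs = n.
  have := size_char_poly (Gm X t); rewrite -/(cp X t) Ers size_prod_XsubC.
  by case.
have inS r : r \in rs -> r \in Sroots X.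
  move=> hr'; have : root (cp X t) r by rewrite Ers root_prod_XsubC.
  by rewrite hr E0 root_prod_XsubC.
have hidx (i : 'I_n) : (index (nth (0%R : K) rs i) (Sroots X) < size (Sroots X))%N.
  by rewrite index_mem; apply: inS; apply: mem_nth; rewrite Hsize.
apply/codomP; exists [ffun i => Ordinal (hidx i)].
rewrite Ers (big_nth (0 : K)) Hsize big_mkord; apply: eq_bigr => i _.
rewrite ffunE /= nth_index //; apply: inS; apply: mem_nth; by rewrite Hsize.
Qed.

Lemma const_of_circ n (X : 'M[K]_n) : circular X -> forall t1 t2, cp X t1 = cp X t2.
Proof.
move=> hc.
have hr t z : root (cp X t) z = root (cp X 0) z.
  have := hc t 0 (z / 2); rewrite !eig_cp mulrC divfK //.
  by rewrite pnatr_eq0.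
suff [d hd] : exists d, forall t, cp X t = d.
  by move=> t1 t2; rewrite (hd t1) (hd t2).
apply: NNPP => hn.
apply: (@cover_circ _ _ (cp X) (Dset X) (inD hr)) => d _.
have : ~ (forall t, cp X t = d) by move=> h; apply: hn; exists d.
move/not_all_ex_not => [t0 ht0].
have [z0 hz] : exists z, (cp X t0).[z] != d.[z].
  apply: NNPP => hz; apply: ht0; apply: poly_eq_nz => u _; apply/eqP.
  apply: NNPP => e; apply: hz; exists u; exact/negP.
exists (Fz X z0 - d.[z0] *: 'X^n).
  apply/negP => /eqP h0.
  have := congr1 (fun p => p.[expi t0]) h0.
  rewrite /= hornerD hornerN hornerZ hornerXn Fz_ev Frep horner0.
  move/eqP; rewrite [_ * (cp X t0).[z0]]mulrC -mulrBl mulf_eq0 expf_eq0 subr_eq0.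
  by rewrite (negbTE hz) (negbTE (expi_neq0 _)) andbF.
move=> t e; rewrite hornerD hornerN hornerZ hornerXn Fz_ev Frep e.
by rewrite mulrC subrr.
Qed.
End S.
Section S.
Variable R : realType.
Local Notation K := R[i].
Definition pc (P : {poly {poly K}}) i j : K := (P`_j)`_i.
Definition Bd (P : {poly {poly K}}) : nat := maxn (size P) (\max_(j < size P) size (nth 0%R P j))%N.

Lemma pB1 (P : {poly {poly K}}) j : (Bd P <= j)%N -> P`_j = 0.
Proof. move=> h; apply: nth_default; apply: leq_trans h; exact: leq_maxl. Qed.

Lemma szB (P : {poly {poly K}}) j : (size (nth 0%R P j) <= Bd P)%N.
Proof.
case: (ltnP j (size P)) => hj.
  apply: (@leq_trans (\max_(j0 < size P) size (nth 0%R P j0))%N); last exact: leq_maxr.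
  by rewrite (bigD1 (Ordinal hj)) //= leq_maxl.
by rewrite nth_default // size_poly0.
Qed.

Lemma pB2 (P : {poly {poly K}}) i j : (Bd P <= i)%N -> pc P i j = 0.
Proof. by move=> h; apply: nth_default; apply: leq_trans h; exact: szB. Qed.

Lemma E1 (P : {poly {poly K}}) x y : eval2 P x y = \sum_(i < Bd P) \sum_(j < Bd P) pc P i j * x ^+ i * y ^+ j.
Proof.
rewrite /eval2 (@horner_coef_wide _ (Bd P) P); last exact: leq_maxl.
rewrite horner_sum.
rewrite [RHS](exchange_big) /=; apply: eq_bigr => j _.
rewrite hornerM -polyC_exp hornerC (@horner_coef_wide _ (Bd P) (P`_j)); last exact: szB.
by rewrite mulr_suml.
Qed.
End S.
Section S.
Variable R : realType.
Local Notation K := R[i].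
Lemma expi0 : expi (0 : R) = 1.
Proof. by rewrite /expi cos0 sin0. Qed.

Lemma wpow (w : K) i j B : w != 0 -> (i <= B)%N ->
  w ^+ (j + B - i) = w ^+ B * (w^-1 ^+ i * w ^+ j).
Proof.
move=> w0 hi; rewrite -addnBA // exprD.
rewrite -{2}(subnK hi) exprD exprVn mulrC -!mulrA; congr (_ * _).
by rewrite mulrA mulfV ?mul1r // expf_neq0.
Qed.

Lemma stage1 (P : {poly {poly K}})
  (hinv : forall t u, u != 0 -> eval2 P (expi (- t) * u) (expi t * u) = eval2 P u u)
  u m : u != 0 -> m != Bd P ->
  \sum_(i < Bd P) \sum_(j < Bd P) (pc P i j * u ^+ (i + j)%N) * (m == (j + Bd P - i)%N)%:R = 0.
Proof.
move=> u0 mB.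
pose V := \sum_(i < Bd P) \sum_(j < Bd P) (pc P i j * u ^+ (i + j)%N) *: 'X^(j + Bd P - i)%N
          - (eval2 P u u) *: 'X^(Bd P).
have V0 : V = 0.
  apply: poly0_circ => t.
  have w0 : expi t != 0 by exact: expi_neq0.
  have h : (\sum_(i < Bd P) \sum_(j < Bd P) (pc P i j * u ^+ (i + j)%N) *: 'X^(j + Bd P - i)%N).[expi t]
     = expi t ^+ Bd P * eval2 P (expi (- t) * u) (expi t * u).
    rewrite E1 expiN mulr_sumr horner_sum; apply: eq_bigr => i _.
    rewrite horner_sum mulr_sumr; apply: eq_bigr => j _.
    rewrite hornerZ hornerXn (wpow _ w0 (ltnW (ltn_ord i))) !exprMn exprD.
    move: (pc P i j) (u ^+ i) (u ^+ j) (expi t ^+ Bd P) ((expi t)^-1 ^+ i) (expi t ^+ j).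
    by move=> a1 a2 a3 a4 a5 a6; ring.
  by rewrite /V hornerD hornerN hornerZ hornerXn h hinv // mulrC subrr.
have := congr1 (fun p : {poly K} => p`_m) V0.
rewrite /V coefB coef_sum coefZ coefXn (negbTE mB) mulr0 subr0 coef0 => e.
apply: (etrans _ e); apply: eq_bigr => i _; rewrite coef_sum; apply: eq_bigr => j _.
by rewrite coefZ coefXn.
Qed.

Lemma stage2 (P : {poly {poly K}})
  (hinv : forall t u, u != 0 -> eval2 P (expi (- t) * u) (expi t * u) = eval2 P u u)
  m s : m != Bd P ->
  \sum_(i < Bd P) \sum_(j < Bd P) pc P i j * (m == (j + Bd P - i)%N)%:R * (s == (i + j)%N)%:R = 0.
Proof.
move=> mB.
pose W := \sum_(i < Bd P) \sum_(j < Bd P) (pc P i j * (m == (j + Bd P - i)%N)%:R) *: 'X^(i + j)%N.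
have W0 : W = 0.
  apply: poly0_nz => u u0; rewrite -(stage1 hinv u0 mB) /W horner_sum.
  apply: eq_bigr => i _; rewrite horner_sum; apply: eq_bigr => j _.
  by rewrite hornerZ hornerXn mulrAC.
have := congr1 (fun p : {poly K} => p`_s) W0.
rewrite /W coef_sum coef0 => e.
apply: (etrans _ e); apply: eq_bigr => i _; rewrite coef_sum; apply: eq_bigr => j _.
by rewrite coefZ coefXn.
Qed.
End S.
Section S.
Variable R : realType.
Local Notation K := R[i].
Lemma stage3 (P : {poly {poly K}})
  (hinv : forall t u, u != 0 -> eval2 P (expi (- t) * u) (expi t * u) = eval2 P u u)
  i0 j0 : (i0 < Bd P)%N -> (j0 < Bd P)%N -> i0 != j0 -> pc P i0 j0 = 0.
Proof.
move=> hi hj ne.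
have mB : (j0 + Bd P - i0)%N != Bd P.
  by apply/negP => /eqP h; move/negP: ne; apply; apply/eqP; lia.
have Hz (i j : 'I_(Bd P)) : ((i : nat) != i0) || ((j : nat) != j0) ->
    pc P i j * ((j0 + Bd P - i0)%N == (j + Bd P - i)%N)%:R * ((i0 + j0)%N == (i + j)%N)%:R = 0.
  move=> hne; rewrite -mulrA -natrM mulnb.
  suff -> : (((j0 + Bd P - i0)%N == (j + Bd P - i)%N) && ((i0 + j0)%N == (i + j)%N)) = false.
    by rewrite mulr0.
  apply/negbTE/negP => /andP [/eqP e1 /eqP e2]; move: hne; apply/negP.
  have := ltn_ord i; have := ltn_ord j; move=> hj' hi'.
  by rewrite negb_or !negbK; apply/andP; split; apply/eqP; lia.
have := stage2 hinv (i0 + j0)%N mB.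
rewrite (bigD1 (Ordinal hi)) //= (bigD1 (Ordinal hj)) //= !eqxx !mulr1.
rewrite big1 ?addr0; last first.
  move=> j hj'; apply: (Hz (Ordinal hi) j); apply/orP; right.
  by apply: contra hj' => /eqP e; apply/eqP; apply: val_inj.
rewrite big1 ?addr0 //.
move=> i hi'; apply: big1 => j _; apply: (Hz i j); apply/orP; left.
by apply: contra hi' => /eqP e; apply/eqP; apply: val_inj.
Qed.
End S.
Section S.
Variable R : realType.
Local Notation K := R[i].
Lemma Cxy_of_inv (P : {poly {poly K}})
  (hinv : forall t u, u != 0 -> eval2 P (expi (- t) * u) (expi t * u) = eval2 P u u) :
  in_Cxy P.
Proof.
exists (\poly_(k < Bd P) pc P k k).
set q := \poly_(k < Bd P) pc P k k.
have hq : (size (map_poly (@cst2 R) q) <= Bd P)%N.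
  apply: leq_trans (size_poly _ _) _; exact: size_poly.
rewrite (@horner_coef_wide _ (Bd P) (map_poly (@cst2 R) q) _ hq).
apply/polyP => j; apply/polyP => i.
rewrite !coef_sum.
have -> : \sum_(k < Bd P) ((map_poly (@cst2 R) q)`_k * (polyx R * polyy R) ^+ k)`_j`_i
   = \sum_(k < Bd P) (pc P k k * (i == k)%:R) *+ (j == k).
  apply: eq_bigr => k _.
  rewrite coef_map_id0; last by rewrite /cst2.
  rewrite coef_poly ltn_ord exprMn mulrA /cst2 /polyx /polyy -polyC_exp -!polyCM.
  by rewrite coefCM coefXn mulr_natr coefMn coefCM coefXn.
rewrite -/(pc P i j).
case: (ltnP j (Bd P)) => hjB.
  rewrite (bigD1 (Ordinal hjB)) //= eqxx mulr1n big1 ?addr0; last first.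
    move=> k hk; rewrite (_ : (j == k) = false) ?mulr0n //.
    by apply/negbTE; apply: contra hk => /eqP e; apply/eqP; apply: val_inj.
  case: (eqVneq i j) => [-> | ne]; first by rewrite mulr1.
  rewrite ?(negbTE ne) /= mulr0.
  case: (ltnP i (Bd P)) => hiB; first exact: (stage3 hinv hiB hjB ne).
  exact: pB2.
rewrite big1; last first.
  move=> k _; have -> : (j == k) = false.
    by apply/negbTE; apply/eqP => e; move: (ltn_ord k); rewrite -e ltnNge hjB.
  by rewrite mulr0n.
by rewrite /pc pB1 // coef0.
Qed.
End S.
Section S.
Variable R : realType.
Local Notation K := R[i].
Lemma inv_of_const n (X : 'M[K]_n) (P : {poly {poly K}})
  (H : forall z t, z != 0 -> (cp X t).[z] = z ^+ n * eval2 P (expi (- t) / z) (expi t / z))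
  (hc : forall t1 t2, cp X t1 = cp X t2) :
  forall t u, u != 0 -> eval2 P (expi (- t) * u) (expi t * u) = eval2 P u u.
Proof.
move=> t u u0.
have z0 : u^-1 != 0 by rewrite invr_eq0.
have e1 := H _ t z0; have e2 := H _ 0 z0.
have : u^-1 ^+ n * eval2 P (expi (- t) / u^-1) (expi t / u^-1)
     = u^-1 ^+ n * eval2 P (expi (- 0) / u^-1) (expi 0 / u^-1).
  apply: (etrans (esym e1)); apply: (etrans _ e2).
  exact: (congr1 (fun p : {poly K} => p.[u^-1]) (hc t 0)).
move/(mulfI (expf_neq0 n z0)); rewrite !invrK oppr0 expi0 !mul1r.
by [].
Qed.

Lemma GL n (X : 'M[K]_n) (P : {poly {poly K}}) :
  (forall z t, z != 0 ->
     \det (z%:M - expi (- t) *: X - expi t *: adjmx X) = z ^+ n * eval2 P (expi (- t) / z) (expi t / z)) ->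
  (circular X <-> in_Cxy P).
Proof.
move=> Hd.
have H : forall z t, z != 0 -> (cp X t).[z] = z ^+ n * eval2 P (expi (- t) / z) (expi t / z).
  move=> z t z0; apply: (etrans (hchar _ _)); apply: (etrans _ (Hd z t z0)).
  by rewrite /Gm opprD addrA.
split => [hc | hp].
  by apply: Cxy_of_inv; apply: inv_of_const H (const_of_circ hc).
by apply: circ_of_const; exact: const_of_Cxy H hp.
Qed.
End S.

Theorem mainTheorem8 (R : realType) (m d : nat)
    (B : 'M[R[i]]_(m, d)) (C : 'M[R[i]]_d) :
  adjmx B *m B + adjmx C *m C = 1%:M ->
  let A : 'M[R[i]]_(m + d) := block_mx 0 B 0 C in
  (forall (z : R[i]) (t : R), z != 0 ->
     \det (z%:M - expi (- t) *: A - expi t *: adjmx A)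
       = z ^+ (m + d) * eval2 (QC C) (expi (- t) / z) (expi t / z)
  /\ \det (z%:M - expi (- t) *: C - expi t *: adjmx C)
       = z ^+ d * eval2 (PC C) (expi (- t) / z) (expi t / z))
  /\ (circular A <-> in_Cxy (QC C))
  /\ (circular C <-> in_Cxy (PC C)).
Proof.
move=> hBC A.
have h1 : forall (z : R[i]) (t : R), z != 0 ->
     \det (z%:M - expi (- t) *: A - expi t *: adjmx A)
       = z ^+ (m + d) * eval2 (QC C) (expi (- t) / z) (expi t / z).
  by move=> z t z0; exact: part1a hBC z t z0.
have h2 : forall (z : R[i]) (t : R), z != 0 ->
     \det (z%:M - expi (- t) *: C - expi t *: adjmx C)
       = z ^+ d * eval2 (PC C) (expi (- t) / z) (expi t / z).
  by move=> z t z0; exact: part1b C z t z0.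
split; first by move=> z t z0; split; [exact: h1 | exact: h2].
by split; apply: GL.
Qed.
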